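(* Let $R$ be a commutative Artinian ring, $M$ a non-zero $R$-module, and $M=\sum_{i=1}^n K_i$ a minimal PS-hollow representation of $M$. Suppose that every submodule of $K_i$ is PS-hollow (in $M$) for all $i\in\{1,\dots,n\}$. If $In(K_i)\cap In(K_j)=0$ for all $i\neq j$ in $\{1,\dots,n\}$, then $M=\bigoplus_{i=1}^n K_i$.
   Context: An $R$-submodule $N\leq M$ is PS-hollow iff for every ideal $I\leq R$ and every submodule $L\leq M$: $N\subseteq IM+L$ implies $N\subseteq IM$ or $N\subseteq L$. For PS-hollow $N$: $A_N=\{I\leq R: N\subseteq IM\}$, $H_N$ the set of minimal elements of $A_N$, $In(N)=\bigcap_{I\in H_N}IM$ ($=M$ if $H_N=\emptyset$); $N$ is $H$-PS-hollow iff PS-hollow with $H_N=H$. A minimal PS-hollow representation is $M=\sum_{i=1}^n K_i$ with each $K_i$ $H_i$-PS-hollow, $In(K_1),\dots,In(K_n)$ pairwise incomparable, and $K_j\not\subseteq\sum_{i\neq j}K_i$ for all $j$. *)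

(* Defs.v *)
From HB Require Import structures.
From mathcomp Require Import all_boot all_order all_algebra.
Set Implicit Arguments. Unset Strict Implicit. Unset Printing Implicit Defensive.
Import GRing.Theory.
Local Open Scope ring_scope.

Section PSHollow.
Variables (R : comNzRingType) (M : lmodType R).

Definition subset_pred {T : Type} (A B : T -> Prop) := forall x, A x -> B x.

Definition ideal (I : R -> Prop) : Prop :=
  [/\ I 0, (forall a b, I a -> I b -> I (a + b)) & (forall r a, I a -> I (r * a))].

Definition artinian_ring : Prop :=
  forall f : nat -> R -> Prop, (forall k, ideal (f k)) ->
    (forall k, subset_pred (f k.+1) (f k)) ->
    exists N, forall m, (N <= m)%N -> subset_pred (f N) (f m).

Definition submodule (N : M -> Prop) : Prop :=
  [/\ N 0, (forall x y, N x -> N y -> N (x + y)) & (forall a x, N x -> N (a *: x))].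

Definition idealM (I : R -> Prop) : M -> Prop :=
  fun x => exists k (a : 'I_k -> R) (m : 'I_k -> M),
    (forall t, I (a t)) /\ x = \sum_(t < k) a t *: m t.

Definition addsub (N L : M -> Prop) : M -> Prop :=
  fun x => exists y z, N y /\ L z /\ x = y + z.

Definition PS_hollow (N : M -> Prop) : Prop :=
  submodule N /\
  forall (I : R -> Prop) (L : M -> Prop), ideal I -> submodule L ->
    subset_pred N (addsub (idealM I) L) ->
    subset_pred N (idealM I) \/ subset_pred N L.

Definition A_set (N : M -> Prop) (I : R -> Prop) : Prop :=
  ideal I /\ subset_pred N (idealM I).

Definition H_set (N : M -> Prop) (I : R -> Prop) : Prop :=
  A_set N I /\ forall J, A_set N J -> subset_pred J I -> subset_pred I J.

(* In(N) = intersection of IM over I in H_N  (= M when H_N is empty) *)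
Definition In_sub (N : M -> Prop) : M -> Prop :=
  fun x => forall I, H_set N I -> idealM I x.

Definition sum_sub n (P : pred 'I_n) (K : 'I_n -> M -> Prop) : M -> Prop :=
  fun x => exists f : 'I_n -> M,
    (forall i, P i -> K i (f i)) /\ x = \sum_(i < n | P i) f i.

Definition minimal_PS_hollow_rep n (K : 'I_n -> M -> Prop) : Prop :=
  [/\ forall x : M, sum_sub predT K x,
      forall i, PS_hollow (K i),
      forall i j, i != j -> ~ subset_pred (In_sub (K i)) (In_sub (K j))
    & forall j, ~ subset_pred (K j) (sum_sub (fun i => i != j) K)].

Definition direct_sum_decomp n (K : 'I_n -> M -> Prop) : Prop :=
  (forall x : M, sum_sub predT K x) /\
  forall j x, K j x -> sum_sub (fun i => i != j) K x -> x = 0.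

End PSHollow.

(* Main.v *)
Require Import Defs.
From HB Require Import structures.
From mathcomp Require Import all_boot all_order all_algebra.
From Stdlib Require Import Classical.
Local Open Scope ring_scope.
Import GRing.Theory.

Section Aux.
Variables (R : comNzRingType) (M : lmodType R) (n : nat) (K : 'I_n -> M -> Prop).
Hypothesis Hsub : forall i, submodule (K i).

Lemma sum_sub_submodule (P : pred 'I_n) : submodule (sum_sub P K).
Proof.
split.
- exists (fun _ => 0); split=> [i _|]; first by case: (Hsub i).
  by rewrite big1.
- move=> x y [f [Hf ->]] [g [Hg ->]].
  exists (fun i => f i + g i); split; last by rewrite big_split.
  move=> i Pi; case: (Hsub i) => _ HD _; exact: HD (Hf i Pi) (Hg i Pi).
- move=> a x [f [Hf ->]].
  exists (fun i => a *: f i); split; last by rewrite scaler_sumr.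
  move=> i Pi; case: (Hsub i) => _ _ HZ; exact: HZ (Hf i Pi).
Qed.

Lemma idealM_scale (I : R -> Prop) : ideal I ->
  forall a x, @idealM _ M I x -> @idealM _ M I (a *: x).
Proof.
move=> [_ _ HI] a x [k [b [m [Hb ->]]]].
exists k, (fun t => a * b t), m; split; first by move=> t; apply: HI.
rewrite scaler_sumr; apply: eq_bigr => t _; by rewrite scalerA.
Qed.

Definition cyclic (x : M) : M -> Prop := fun y => exists a, y = a *: x.

Lemma cyclic_sub x : submodule (cyclic x).
Proof.
split.
- by exists 0; rewrite scale0r.
- move=> y z [a ->] [b ->]; exists (a + b); by rewrite scalerDl.
- move=> a y [b ->]; exists (a * b); by rewrite scalerA.
Qed.

Lemma key j x (HPS : PS_hollow (cyclic x))
  (Hdisj : forall i, i != j -> In_sub (K i) x -> x = 0) :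
  forall m (P : pred 'I_n), (#|P| <= m)%N -> (forall i, P i -> i != j) ->
    sum_sub P K x -> x = 0.
Proof.
elim=> [|m IH] P HP Pj [f [Hf Hx]].
  rewrite leqn0 in HP; move/eqP: HP => /card0_eq HP.
  by rewrite Hx big_pred0.
case: (pickP P) => [i0 Pi0|P0]; last by rewrite Hx big_pred0.
case: (classic (forall I, H_set (K i0) I -> @idealM _ M I x)) => [Hall|Hn].
  exact: Hdisj i0 (Pj i0 Pi0) Hall.
have [I HI] := not_all_ex_not _ _ Hn.
have [HH Hnx] := imply_to_and _ _ HI.
case: HH => [[Iid HKI] _].
set P' : pred 'I_n := fun i => P i && (i != i0).
case: HPS => _ /(_ I (sum_sub P' K) Iid (sum_sub_submodule P')) H.
case: H.
- move=> y [a ->]; exists (a *: f i0), (a *: \sum_(i | P' i) f i).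
  split; first by apply: HKI; case: (Hsub i0) => _ _ HZ; exact: HZ (Hf i0 Pi0).
  split; first by case: (sum_sub_submodule P') => _ _ HZ; apply: HZ; exists f; split=> // i /andP [Pi _]; exact: Hf.
  by rewrite -scalerDr Hx (bigD1 i0 Pi0).
- move=> Hx'; exfalso; apply: Hnx; have := Hx' x; rewrite /cyclic.
  by move=> /(_ (ex_intro _ 1 (esym (scale1r x)))).
- move=> HL; have Lx := HL x (ex_intro _ 1 (esym (scale1r x))).
  apply: (IH P') => //; last by move=> i /andP [Pi _]; exact: Pj.
  have : (#|P'| < #|P|)%N.
    rewrite (cardD1 i0 P) [i0 \in P]Pi0 add1n ltnS.
    by apply/eq_leq/eq_card => i; rewrite !inE /P' andbC.
  move=> lt; exact: leq_trans lt HP.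
Qed.

End Aux.

Theorem theorem5p23 (R : comNzRingType) (M : lmodType R) (n : nat)
    (K : 'I_n -> M -> Prop) :
  artinian_ring R ->
  (exists x : M, x <> 0) ->
  minimal_PS_hollow_rep K ->
  (forall i (N : M -> Prop), submodule N -> subset_pred N (K i) -> PS_hollow N) ->
  (forall i j, i != j -> forall x, In_sub (K i) x -> In_sub (K j) x -> x = 0) ->
  direct_sum_decomp K.
Proof.
move=> _ _ [Hall HPS _ _] Hsubps Hdisj.
have Hsub : forall i, submodule (K i) by move=> i; case: (HPS i).
split=> // j x Kx Sx.
have Inj : In_sub (K j) x by move=> I [[_ HI] _]; exact: HI.
apply: (@key R M n K Hsub j x _ _ #|(fun i : 'I_n => i != j)| (fun i => i != j)) => //.
- apply: (Hsubps j); first exact: cyclic_sub.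
  by move=> y [a ->]; case: (Hsub j) => _ _ HZ; exact: HZ.
- move=> i ij Ini; apply: (Hdisj i j ij) => //.
Qed.
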